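(* Over profiles whose ballots are strict weak orders (ties allowed), let $f$ be a VCCR satisfying Downward Homogeneity, Coherent Defeat, and Positive Involvement in Defeat. Then $f(\mathbf P)\supseteq sc(\mathbf P)$ for every profile $\mathbf P$.
   Context: Profiles: $\mathbf P:V\to\mathcal W(X)$, $V$ nonempty finite set of voters, $X=X(\mathbf P)$ nonempty finite set of candidates (from fixed infinite sets), $\mathcal W(X)$ the strict weak orders on $X$ (ties allowed). ''Ranks $x$ above $y$'' means strictly. $\mathrm{Margin}_{\mathbf P}(x,y)$ = #voters with $x$ strictly above $y$ minus #voters with $y$ strictly above $x$. Majority path from $x_1$ to $x_n$: $(x_1,\dots,x_n)$ with all $\mathrm{Margin}_{\mathbf P}(x_i,x_{i+1})>0$; strength = minimum of these. VCCR: $f(\mathbf P)$ asymmetric relation on $X(\mathbf P)$. $(x,y)\in sc(\mathbf P)$ iff $\mathrm{Margin}_{\mathbf P}(x,y)>0$ exceeds the strength of every majority path from $y$ to $x$. Downward Homogeneity: $f(\mathbf P)\supseteq f(2\mathbf P)$ where $2\mathbf P$ replaces each voter by two copies. Coherent Defeat: $\mathrm{Margin}_{\mathbf P}(x,y)>0$ and no majority path from $y$ to $x$ imply $(x,y)\in f(\mathbf P)$. Positive Involvement in Defeat: if $(x,y)\notin f(\mathbf P)$ and $\mathbf P'$ adds one new voter whose ballot ranks $y$ strictly above $x$, then $(x,y)\notin f(\mathbf P')$. *)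

(* Defs.v *)
From mathcomp Require Import all_boot all_order all_algebra.
From mathcomp Require Import finmap.
Set Implicit Arguments. Unset Strict Implicit. Unset Printing Implicit Defensive.
Import Order.TTheory GRing.Theory Num.Theory.
Local Open Scope fset_scope.
Local Open Scope ring_scope.

Notation voter := nat.
Notation cand := nat.

Definition strict_weak_order (X : {fset cand}) (b : rel cand) : Prop :=
  [/\ (forall x y, b x y -> (x \in X) && (y \in X)),
      (forall x y, x \in X -> y \in X -> b x y -> ~~ b y x) &
      (forall x y z, x \in X -> y \in X -> z \in X ->
          b x z -> b x y || b y z)].

(* A profile P : V -> W(X).  The ballot function is canonical (it is
   false outside V), so a profile is determined by (V, X, ballots). *)
Record profile := Profile {
  pV : {fset voter};
  pX : {fset cand};
  pB : voter -> rel cand;           (* pB i x y : voter i ranks x strictly above y *)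
  pV_ne : pV != fset0;
  pX_ne : pX != fset0;
  pB_swo : forall i, i \in pV -> strict_weak_order pX (pB i);
  pB_out : forall i x y, pB i x y -> i \in pV
}.

Definition margin (P : profile) (x y : cand) : int :=
  \sum_(i <- pV P) ((pB P i x y : nat)%:Z - (pB P i y x : nat)%:Z).

Definition majority_path (P : profile) (x : cand) (s : seq cand) : bool :=
  (s != [::]) && path (fun a b => 0 < margin P a b) x s.

Definition seqmin (l : seq int) : int :=
  if l is m :: ms then foldr Num.min m ms else 0.
Definition path_strength (P : profile) (x : cand) (s : seq cand) : int :=
  seqmin (pairmap (margin P) x s).

Definition sc (P : profile) (x y : cand) : Prop :=
  0 < margin P x y /\
  forall s : seq cand, majority_path P y s -> last y s = x ->
    path_strength P y s < margin P x y.

Definition VCCR (f : profile -> rel cand) : Prop :=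
  forall P, (forall x y, f P x y -> (x \in pX P) && (y \in pX P)) /\
            (forall x y, f P x y -> ~~ f P y x).

(* Q is a profile 2P: each voter of P replaced by two copies (g sends each
   voter of Q to the voter of P it copies). *)
Definition doubled (P Q : profile) : Prop :=
  pX Q = pX P /\
  exists g : voter -> voter,
    (forall j, j \in pV Q -> g j \in pV P /\ pB Q j =2 pB P (g j)) /\
    (forall i, i \in pV P -> #|` [fset j in pV Q | g j == i]| = 2%N).

Definition downward_homogeneity (f : profile -> rel cand) : Prop :=
  forall P Q, doubled P Q -> forall x y, f Q x y -> f P x y.

Definition no_majority_path (P : profile) (y x : cand) : Prop :=
  forall s, majority_path P y s -> last y s <> x.

Definition coherent_defeat (f : profile -> rel cand) : Prop :=
  forall P x y, 0 < margin P x y -> no_majority_path P y x -> f P x y.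

Definition adds_voter (P P' : profile) (i : voter) : Prop :=
  [/\ i \notin pV P, pV P' = i |` pV P, pX P' = pX P &
      forall j, j \in pV P -> pB P' j =2 pB P j].

Definition positive_involvement_in_defeat (f : profile -> rel cand) : Prop :=
  forall P P' i x y, adds_voter P P' i -> pB P' i y x ->
    ~ f P x y -> ~ f P' x y.

(* Main.v *)
Require Import Defs.
From mathcomp Require Import all_boot all_order all_algebra finmap zify.
From Stdlib Require Import ClassicalEpsilon.
Set Implicit Arguments. Unset Strict Implicit. Unset Printing Implicit Defensive.
Import Order.TTheory GRing.Theory Num.Theory.
Local Open Scope fset_scope.
Local Open Scope ring_scope.

Definition dterm (Q : profile) (a b : cand) (j : voter) : int :=
  ((pB Q j a b : nat)%:Z - (pB Q j b a : nat)%:Z).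

Lemma margin_seq (Q : profile) (s : seq voter) a b :
  uniq s -> {subset pV Q <= s} -> margin Q a b = \sum_(j <- s) dterm Q a b j.
Proof.
move=> us sub.
have -> : \sum_(j <- s) dterm Q a b j =
          \sum_(j <- s) (if j \in pV Q then dterm Q a b j else 0).
  apply: eq_bigr => j _; case: ifP => // /negbT nj.
  rewrite /dterm.
  have h1 : pB Q j a b = false by apply/negP => /pB_out; rewrite (negbTE nj).
  have h2 : pB Q j b a = false by apply/negP => /pB_out; rewrite (negbTE nj).
  by rewrite h1 h2.
rewrite -big_mkcond /= -big_filter /margin /dterm.
apply: perm_big; apply: uniq_perm.
- exact: fset_uniq.
- exact: filter_uniq.
- by move=> j; rewrite mem_filter; case: (boolP (j \in pV Q)) => // /sub ->.
Qed.

Lemma margin_anti (Q : profile) a b : margin Q b a = - margin Q a b.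
Proof. by rewrite /margin -sumrN; apply: eq_bigr => i _; rewrite opprB. Qed.

Lemma margin_xx (Q : profile) a : margin Q a a = 0.
Proof. by rewrite /margin big1 // => i _; rewrite subrr. Qed.

Lemma margin_pos_in (Q : profile) a b : 0 < margin Q a b ->
  (a \in pX Q) && (b \in pX Q).
Proof.
move=> hp; apply/negPn/negP => hn; move: hp; apply/negP; rewrite -leNgt.
rewrite /margin -oppr_ge0 -sumrN; apply: sumr_ge0 => i _.
have -> : pB Q i a b = false.
  apply/negP => hb; case: (pB_swo (pB_out hb)) => h1 _ _; by rewrite h1 in hn.
by rewrite /= sub0r opprK.
Qed.

Lemma seqmin_ge (N : int) l : l != [::] -> all (fun m => N <= m) l -> N <= seqmin l.
Proof.
case: l => // m ms _ /= /andP [hm]; elim: ms => //= m' ms IH /andP [h1 h2].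
by rewrite le_min h1 IH.
Qed.

Lemma strength_ge (Q : profile) (N : int) y s : s != [::] ->
  path (fun a b => N <= margin Q a b) y s -> N <= path_strength Q y s.
Proof.
move=> sn hp; apply: seqmin_ge; first by case: s sn {hp}.
elim: s y hp {sn} => //= b s IH y /andP [h1 h2]; by rewrite h1 IH.
Qed.

Lemma half_sum (h : nat -> int) m :
  \sum_(0 <= j < m.*2) h j./2 = (\sum_(0 <= i < m) h i) *+ 2.
Proof.
elim: m => [|m IH]; first by rewrite !big_geq.
rewrite doubleS !big_nat_recr //= IH.
rewrite uphalf_double doubleK.
by rewrite !mulr2n -addrA addrACA addrA.
Qed.
Section Construction.
Variables (P : profile) (x y : cand) (N : nat).

Definition reach z := exists s, path (fun a b => N%:Z <= margin P a b) y s && (last y s == z).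
Definition inS z : bool := if excluded_middle_informative (reach z) then true else false.
Lemma inSP z : reflect (reach z) (inS z).
Proof. by rewrite /inS; case: excluded_middle_informative => h; constructor. Qed.

Definition lvl z : nat :=
  if z == x then 2%N else if z == y then 1%N else if inS z then 3%N else 0%N.
Definition C (a b : cand) : bool := [&& a \in pX P, b \in pX P & (lvl a < lvl b)%N].

Lemma C_swo : strict_weak_order (pX P) C.
Proof.
split.
- by move=> a b /and3P [-> ->].
- move=> a b _ _ /and3P [_ _ h]; apply/negP => /and3P [_ _ h']; lia.
- move=> a b c ha hb hc /and3P [_ _ h]; rewrite /C ha hb hc /=; lia.
Qed.

Definition M : nat := (\max_(i <- pV P) i).+1.
Lemma V0_lt i : i \in pV P -> (i < M)%N.
Proof. by move=> h; rewrite ltnS; exact: (@leq_bigmax_seq nat (pV P : seq nat) xpredT (fun i : nat => i) i h isT). Qed.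

Definition memR (k j : nat) : bool :=
  (j./2 \in pV P) || ((M.*2 <= j) && (j < M.*2 + k))%N.
Definition VR (k : nat) : {fset voter} :=
  seq_fset tt [seq j <- iota 0 (M.*2 + k) | memR k j].
Lemma inVR k j : (j \in VR k) = memR k j.
Proof.
rewrite seq_fsetE mem_filter mem_iota /=; case h: (memR k j) => //=.
move: h; rewrite /memR; case/orP => [/V0_lt|]; lia.
Qed.

Definition BR (k : nat) (j : voter) : rel cand := fun a b =>
  if j./2 \in pV P then pB P j./2 a b
  else if ((M.*2 <= j) && (j < M.*2 + k))%N then C a b else false.

Lemma BR_swo k : forall i, i \in VR k -> strict_weak_order (pX P) (BR k i).
Proof.
move=> i; rewrite inVR /memR /BR; case h: (i./2 \in pV P) => /=.
  by move=> _; exact: pB_swo.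
by move=> ->; exact: C_swo.
Qed.

Lemma BR_out k : forall i a b, BR k i a b -> i \in VR k.
Proof.
move=> i a b; rewrite inVR /memR /BR; case: ifP => // _.
by case: ifP.
Qed.

Lemma VR_ne k : VR k != fset0.
Proof.
case/fset0Pn: (pV_ne P) => i hi; apply/fset0Pn; exists i.*2.
by rewrite inVR /memR doubleK hi.
Qed.

Definition R (k : nat) : profile :=
  @Profile (VR k) (pX P) (BR k) (VR_ne k) (pX_ne P) (@BR_swo k) (@BR_out k).

Lemma BR_low k j a b : (j < M.*2)%N -> BR k j a b = pB P j./2 a b.
Proof.
move=> hj; rewrite /BR; case: ifP => // hn.
have -> : ((M.*2 <= j) && (j < M.*2 + k))%N = false by lia.
by apply/esym/negP => /pB_out; rewrite hn.
Qed.

Lemma margin_R k a b : margin (R k) a b =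
  margin P a b *+ 2 + ((C a b : nat)%:Z - (C b a : nat)%:Z) *+ k.
Proof.
rewrite (@margin_seq (R k) (index_iota 0 (M.*2 + k))); last first.
- by move=> j; rewrite mem_index_iota /= inVR /memR; case/orP => [/V0_lt|]; lia.
- exact: iota_uniq.
rewrite (@big_cat_nat _ _ _ M.*2) //=; last exact: leq_addr.
rewrite (@eq_big_nat _ _ _ 0 M.*2 _ (fun j => dterm P a b j./2)); last first.
  by move=> j /andP [_ hj]; rewrite /dterm /= !BR_low.
rewrite half_sum -(@margin_seq P (index_iota 0 M)); last first.
- by move=> j /V0_lt; rewrite mem_index_iota.
- exact: iota_uniq.
congr (_ + _).
rewrite (@eq_big_nat _ _ _ M.*2 (M.*2 + k) _ (fun _ => ((C a b : nat)%:Z - (C b a : nat)%:Z))); last first.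
  move=> j hj; rewrite /dterm /= /BR.
  have -> : (j./2 \in pV P) = false.
    by apply/negP => /V0_lt; move: hj; lia.
  by rewrite hj.
by rewrite sumr_const_nat addKn.
Qed.

End Construction.

From Stdlib Require Import Classical.

Theorem theorem7p8 (f : profile -> rel cand) :
  VCCR f -> downward_homogeneity f -> coherent_defeat f ->
  positive_involvement_in_defeat f ->
  forall (P : profile) (x y : cand), sc P x y -> f P x y.
Proof.
move=> hV hDH hCD hPID P x y [hpos hsc].
have [N hN] : exists N : nat, margin P x y = N%:Z.
  case E: (margin P x y) => [N|N]; first by exists N.
  by rewrite E in hpos.
have N0 : (0 < N)%N by move: hpos; rewrite hN; lia.
have hxy : x != y by apply/eqP => e; move: hpos; rewrite e margin_xx ltxx.
have /andP [hx hy] := margin_pos_in hpos.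
have ry : reach P y N y by exists [::]; rewrite /= eqxx.
have nrx : ~ reach P y N x.
  case=> s /andP [hp /eqP hl].
  have sn : s != [::] by case: s hp hl => //= _ e; rewrite e eqxx in hxy.
  have hmaj : majority_path P y s.
    rewrite /majority_path sn /=; apply: sub_path hp => a b /= h; lia.
  have := hsc s hmaj hl; have := strength_ge sn hp; rewrite hN; lia.
have lx : lvl P x y N x = 2%N by rewrite /lvl eqxx.
have ly : lvl P x y N y = 1%N by rewrite /lvl eq_sym (negbTE hxy) eqxx.
have Cyx : C P x y N y x by rewrite /C hx hy lx ly.
have Cxy : C P x y N x y = false by rewrite /C hx hy lx ly.
pose K := (N.*2).-1.
have mR : margin (R P x y N K) x y = 1.
  rewrite margin_R hN Cyx Cxy /= /K; lia.
have step : forall a b, reach P y N a -> 0 < margin (R P x y N K) a b -> reach P y N b.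
  move=> a b ra hab; case: (inSP P y N b) => [h|nb]; first exact h.
  have /andP [ha hb] := margin_pos_in hab.
  have anx : a != x by apply/eqP => e; apply: nrx; rewrite -e.
  have bny : b != y by apply/eqP => e; apply: nb; rewrite e.
  have mab : margin P a b < N%:Z.
    rewrite ltNge; apply/negP => h; apply: nb.
    case: ra => s /andP [hp /eqP hl]; exists (rcons s b).
    by rewrite rcons_path hp /= hl h last_rcons eqxx.
  have iSa : inS P y N a by apply/inSP.
  have iSb : inS P y N b = false by apply/negP => /inSP.
  case: (eqVneq a y) => [ea|nay].
    case: (eqVneq b x) => [eb|nbx].
      by move: hab; rewrite ea eb margin_anti mR.
    have hCab : C P x y N a b = false by rewrite /C ha hb /lvl (negbTE anx) ea eqxx (negbTE nbx) (negbTE bny) iSb.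
    have hCba : C P x y N b a by rewrite /C ha hb /lvl (negbTE anx) ea eqxx (negbTE nbx) (negbTE bny) iSb.
    move: hab; rewrite margin_R hCab hCba /= /K; lia.
  have hlab : (lvl P x y N b < lvl P x y N a)%N.
    rewrite /lvl (negbTE anx) (negbTE nay) iSa (negbTE bny) iSb.
    by case: (b == x).
  have hCab : C P x y N a b = false.
    by rewrite /C ha hb /=; apply/negbTE; rewrite -leqNgt ltnW.
  have hCba : C P x y N b a by rewrite /C ha hb hlab.
  move: hab; rewrite margin_R hCab hCba /= /K; lia.
have path_reach : forall s a, reach P y N a ->
    path (fun u v => 0 < margin (R P x y N K) u v) a s -> reach P y N (last a s).
  elim=> [|b s IH] a ra //= /andP [h1 h2].
  exact: (IH b (step a b ra h1) h2).
have nmp : no_majority_path (R P x y N K) y x.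
  move=> s /andP [_ hp] hl; apply: nrx; rewrite -hl; exact: path_reach.
have fK : f (R P x y N K) x y by apply: hCD; [rewrite mR | exact: nmp].
have back : forall k, f (R P x y N k.+1) x y -> f (R P x y N k) x y.
  move=> k h; case E: (f (R P x y N k) x y) => //; exfalso.
  pose i := ((M P).*2 + k)%N.
  have hi : (i./2 \in pV P) = false by apply/negP => /V0_lt; rewrite /i; lia.
  have ADD : adds_voter (R P x y N k) (R P x y N k.+1) i.
    split => //.
    - by rewrite /= inVR /memR hi /= /i; lia.
    - apply/fsetP => j; rewrite in_fset1U /= !inVR /memR.
      case: (eqVneq j i) => [->|nji] /=.
        by rewrite hi /= /i; lia.
      by congr (_ || _); move: nji; rewrite /i; lia.
    - move=> j; rewrite /= inVR /memR => hj a b; rewrite /BR.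
      case hj2: (j./2 \in pV P); first done. rewrite hj2 /= in hj. rewrite hj.
      by have -> : ((M P).*2 <= j < (M P).*2 + k.+1)%N by lia.
  have BYX : pB (R P x y N k.+1) i y x.
    by rewrite /= /BR hi /i; have -> : ((M P).*2 <= (M P).*2 + k < (M P).*2 + k.+1)%N by lia.
  by apply: (hPID _ _ _ _ _ ADD BYX) h; rewrite E.
have chain : forall k, f (R P x y N k) x y -> f (R P x y N 0) x y.
  elim => // k IH h; apply: IH; exact: back.
apply: (hDH P (R P x y N 0)); last exact: chain fK.
split => //; exists (fun j => j./2); split.
- move=> j; rewrite inVR /memR => hj.
  have hj' : j./2 \in pV P by case/orP: hj => // ; lia.
  by split => // a b; rewrite /= /BR hj'.
- move=> i hi.
  have -> : [fset j in pV (R P x y N 0) | j./2 == i] = [fset i.*2; i.*2.+1].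
    apply/fsetP => j; rewrite !inE /= inVR /memR.
    case E: (j./2 == i).
      by move/eqP: E => E; rewrite E hi /=; symmetry; lia.
    by rewrite andbF; lia.
  by rewrite cardfs2; have -> : (i.*2 != i.*2.+1) by lia.
Qed.
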